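(* For every real $\eta > -1$, $$ \frac{15\pi}{32} = \frac{ {}_{3}F_{2}\!\!\left[ \begin{matrix} -\tfrac{3}{2},1,-\eta \\ \tfrac{7}{2},2+\eta \end{matrix} \ \Bigg| \ -1 \right] }{ {}_{3}F_{2}\!\!\left[ \begin{matrix} -\tfrac{3}{2},\tfrac{1}{2},1+\eta \\ 1,2+\eta \end{matrix} \ \Bigg| \ 1 \right]}.$$
   Context: ${}_pF_q\left[\begin{matrix} a_1,\dots,a_p\\ b_1,\dots,b_q\end{matrix}\,\Big|\, z\right] = \sum_{n\ge 0} \frac{(a_1)_n\cdots(a_p)_n}{(b_1)_n\cdots(b_q)_n}\frac{z^n}{n!}$ with $(x)_n = \Gamma(x+n)/\Gamma(x)$. *)

(* Defs.v *)
From Stdlib Require Import Reals List.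
From Coquelicot Require Import Coquelicot.
Open Scope R_scope.

Fixpoint poch (x : R) (n : nat) : R :=
  match n with
  | O => 1
  | S m => poch x m * (x + INR m)
  end.

Definition poch_prod (l : list R) (n : nat) : R :=
  fold_right (fun x acc => poch x n * acc) 1 l.

Definition hyp_term (a b : list R) (z : R) (n : nat) : R :=
  poch_prod a n / poch_prod b n * z ^ n / INR (Factorial.fact n).

Definition pFq (a b : list R) (z : R) : R := Series (hyp_term a b z).

(* Main.v *)
Require Import Defs.
From Stdlib Require Import Reals List Lra Lia.
From Coquelicot Require Import Coquelicot.
Import ListNotations.
Open Scope R_scope.

Fixpoint sm (f : nat -> R) (N : nat) : R :=
  match N with O => 0 | S k => sm f k + f k end.

Lemma sm_sum_n (f : nat -> R) N : sum_n f N = sm f (S N).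
Proof.
  induction N.
  - simpl. rewrite sum_O. ring.
  - rewrite sum_Sn, IHN. simpl. unfold plus; simpl. ring.
Qed.

Lemma sm_series (a : nat -> R) (l : R) : is_lim_seq (sm a) l -> is_series a l.
Proof.
  intros H. apply is_lim_seq_incr_1 in H.
  apply (is_lim_seq_ext _ (sum_n a)) in H.
  exact H. intros; rewrite sm_sum_n; auto.
Qed.

Lemma lim_inv_S : is_lim_seq (fun n => / INR (S n)) 0.
Proof.
  apply (is_lim_seq_incr_1 (fun n => / INR n)).
  replace (Finite 0) with (Rbar_inv p_infty) by reflexivity.
  apply is_lim_seq_inv. apply is_lim_seq_INR. discriminate.
Qed.

Lemma lim_rat (g : R -> R) (f : nat -> R) :
  ex_derive g 0 -> (forall n, f n = g (/ INR (S n))) -> is_lim_seq f (g 0).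
Proof.
  intros Hd Hf.
  apply (is_lim_seq_ext (fun n => g (/ INR (S n)))). intros; rewrite Hf; auto.
  apply is_lim_seq_continuous. apply continuity_pt_filterlim.
  exact (ex_derive_continuous g 0 Hd).
  apply lim_inv_S.
Qed.

Lemma is_RInt_eqv (f : R -> R) a b (l1 l2 : R) : is_RInt f a b l1 -> l1 = l2 -> is_RInt f a b l2.
Proof. intros H <-; exact H. Qed.

Definition Iw (n : nat) : R := RInt (fun x => sin x ^ n) 0 (PI/2).

Lemma Iw_ex n : ex_RInt (fun x => sin x ^ n) 0 (PI/2).
Proof. apply (ex_RInt_continuous (V := R_CompleteNormedModule)). intros z _.
  apply (ex_derive_continuous (K := R_AbsRing) (V := R_NormedModule)). auto_derive. auto. Qed.

Lemma Iw0 : Iw 0 = PI/2.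
Proof. unfold Iw. simpl. rewrite RInt_const. unfold scal; simpl. unfold mult; simpl. ring. Qed.

Lemma Iw1 : Iw 1 = 1.
Proof.
  unfold Iw. apply is_RInt_unique.
  assert (H : is_RInt (fun x => sin x ^ 1) 0 (PI/2) (minus ((fun x => - cos x) (PI/2)) ((fun x => - cos x) 0))).
  { apply (is_RInt_derive (V := R_CompleteNormedModule) (fun x => - cos x)).
    - intros x _. auto_derive; auto. ring.
    - intros x _. apply (ex_derive_continuous (K := R_AbsRing) (V := R_NormedModule)). auto_derive. auto. }
  revert H. simpl. rewrite cos_PI2, cos_0. unfold minus, plus, opp; simpl.
  intro H'; apply (is_RInt_eqv _ _ _ _ _ H'). ring.
Qed.

Lemma Iw_rec n : (INR n + 2) * Iw (S (S n)) = (INR n + 1) * Iw n.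
Proof.
  assert (H1 : is_RInt (fun x => (INR n + 2) * sin x ^ (S (S n)) - (INR n + 1) * sin x ^ n) 0 (PI/2) 0).
  { assert (H : is_RInt (fun x => (INR n + 2) * sin x ^ (S (S n)) - (INR n + 1) * sin x ^ n) 0 (PI/2)
      (minus ((fun x => - cos x * sin x ^ (S n)) (PI/2)) ((fun x => - cos x * sin x ^ (S n)) 0))).
    { apply (is_RInt_derive (V := R_CompleteNormedModule) (fun x => - cos x * sin x ^ (S n))).
    - intros x _. auto_derive; auto.
      match goal with |- ?a = ?b => change (@eq R a b) end.
      replace (match n with 0%nat => 1 | S _ => INR n + 1 end) with (INR n + 1) by (destruct n; simpl; ring).
      pose proof (sin2_cos2 x) as Hs. unfold Rsqr in Hs.
      assert (Hc : cos x * cos x = 1 - sin x * sin x) by lra.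
      assert (E : - cos x * (1 * cos x * ((INR n + 1) * sin x ^ n)) = -(cos x * cos x) * ((INR n+1)*sin x^n)) by ring.
      rewrite E, Hc.
      replace (sin x ^ S (S n)) with (sin x * (sin x * sin x ^ n)) by reflexivity. ring.
    - intros x _. apply (ex_derive_continuous (K := R_AbsRing) (V := R_NormedModule)). auto_derive. auto. }
    revert H. simpl. rewrite cos_PI2, sin_0. unfold minus, plus, opp; simpl.
    intro H'; apply (is_RInt_eqv _ _ _ _ _ H'). ring. }
  assert (H2 : is_RInt (fun x => (INR n + 2) * sin x ^ (S (S n)) - (INR n + 1) * sin x ^ n) 0 (PI/2)
      ((INR n + 2) * Iw (S (S n)) - (INR n + 1) * Iw n)).
  { apply (is_RInt_ext (fun x => minus (scal (INR n + 2) (sin x ^ (S (S n)))) (scal (INR n + 1) (sin x ^ n)))).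
    intros; reflexivity.
    apply (is_RInt_minus (V := R_NormedModule)); apply (is_RInt_scal (V := R_NormedModule)); apply (RInt_correct (V := R_CompleteNormedModule)); apply Iw_ex. }
  apply (is_RInt_unique (V := R_CompleteNormedModule)) in H1. apply (is_RInt_unique (V := R_CompleteNormedModule)) in H2. rewrite H1 in H2. lra.
Qed.

Lemma Iw_decr n : Iw (S n) <= Iw n.
Proof.
  unfold Iw. apply RInt_le. pose proof PI_RGT_0; lra. apply Iw_ex. apply Iw_ex.
  intros x Hx. pose proof PI_RGT_0.
  assert (0 <= sin x) by (apply sin_ge_0; lra).
  assert (sin x <= 1) by apply (SIN_bound x).
  assert (0 <= sin x ^ n) by (apply pow_le; lra).
  simpl. nra.
Qed.

Fixpoint ww (M : nat) : R :=
  match M with O => 1 | S k => ww k * (INR k + 1/2) / (INR k + 1) end.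

Lemma ww_pos M : 0 < ww M.
Proof.
  induction M; simpl. lra. pose proof (pos_INR M).
  apply Rdiv_lt_0_compat; [apply Rmult_lt_0_compat|]; lra.
Qed.

Lemma Iw_even M : Iw (2*M) = PI/2 * ww M.
Proof.
  induction M.
  - simpl. rewrite Iw0. ring.
  - replace (2 * S M)%nat with (S (S (2*M))) by lia.
    pose proof (Iw_rec (2*M)) as H. rewrite mult_INR in H. replace (INR 2) with 2 in H by (simpl; ring).
    pose proof (pos_INR M).
    assert (E : Iw (S (S (2*M))) = (2 * INR M + 1) * Iw (2*M) / (2 * INR M + 2)).
    { apply (Rmult_eq_reg_l (2 * INR M + 2)). rewrite H. field. lra. lra. }
    rewrite E, IHM. simpl ww. field; lra.
Qed.

Lemma Iw_odd M : Iw (S (2*M)) = / ((2 * INR M + 1) * ww M).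
Proof.
  induction M.
  - simpl. rewrite Iw1. field.
  - replace (S (2 * S M))%nat with (S (S (S (2*M)))) by lia.
    pose proof (Iw_rec (S (2*M))) as H. rewrite S_INR, mult_INR in H. replace (INR 2) with 2 in H by (simpl; ring).
    pose proof (pos_INR M). pose proof (ww_pos M).
    assert (E : Iw (S (S (S (2*M)))) = (2 * INR M + 2) * Iw (S (2*M)) / (2 * INR M + 3)).
    { apply (Rmult_eq_reg_l (2 * INR M + 3)). replace (2 * INR M + 3) with (2 * INR M + 1 + 2) by ring.
      rewrite H. field. lra. lra. }
    rewrite E, IHM. simpl ww. rewrite S_INR. field. repeat split; lra.
Qed.

Lemma lim_rat0 (g : R -> R) (f : nat -> R) :
  ex_derive g 0 -> (forall n, (1 <= n)%nat -> f n = g (/ INR n)) -> is_lim_seq f (g 0).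
Proof.
  intros Hd Hf. apply is_lim_seq_incr_1. apply lim_rat. auto.
  intros n. apply Hf. lia.
Qed.

Lemma wallis : is_lim_seq (fun M => INR M * ww M ^ 2) (/ PI).
Proof.
  apply is_lim_seq_incr_1.
  pose proof PI_RGT_0 as Hpi.
  assert (Hlow : is_lim_seq (fun K => 2 * INR (S K) / (PI * (2 * INR (S K) + 1))) (/ PI)).
  { assert (E : / PI = (fun x => 2 / (PI * (2 + x))) 0) by (simpl; field; lra).
    rewrite E. apply (lim_rat (fun x => 2 / (PI * (2 + x)))).
    - auto_derive. apply Rgt_not_eq. apply Rmult_gt_0_compat; lra.
    - intros n. pose proof (pos_INR (S n)). assert (INR (S n) <> 0) by (rewrite S_INR; pose proof (pos_INR n); lra).
      assert (0 < / INR (S n)) by (apply Rinv_0_lt_compat; lra).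
      field. repeat split; try lra. }
  apply (is_lim_seq_le_le (fun K : nat => 2 * INR (S K) / (PI * (2 * INR (S K) + 1))) (fun n : nat => INR (S n) * ww (S n) ^ 2) (fun _ => / PI) _ ) ; [ | exact Hlow | apply is_lim_seq_const].
  intros K.
  pose proof (Iw_decr (2 * S K)) as H1.
  pose proof (Iw_decr (S (2 * K))) as H2.
  replace (S (S (2 * K))) with (2 * S K)%nat in H2 by lia.
  rewrite Iw_odd, Iw_even in H1. rewrite Iw_even, Iw_odd in H2.
  pose proof (ww_pos K) as HwK. pose proof (ww_pos (S K)) as Hw.
  assert (Ew : ww (S K) = ww K * (INR K + 1/2) / (INR K + 1)) by reflexivity.
  set (v := ww (S K)) in *. rewrite S_INR in *. set (m := INR K) in *.
  assert (Hm : 0 <= m) by apply pos_INR.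
  assert (E2 : (2 * m + 1) * ww K = (2 * (m + 1)) * v) by (rewrite Ew; field; lra).
  rewrite E2 in H2.
  assert (Hp1 : 0 < (2 * (m + 1) + 1) * v) by (apply Rmult_lt_0_compat; lra).
  assert (Hp2 : 0 < (2 * (m + 1)) * v) by (apply Rmult_lt_0_compat; lra).
  apply (Rmult_le_compat_r ((2 * (m + 1) + 1) * v)) in H1; [|lra].
  rewrite Rinv_l in H1 by lra.
  apply (Rmult_le_compat_r ((2 * (m + 1)) * v)) in H2; [|lra].
  rewrite Rinv_l in H2 by lra.
  split.
  - apply (Rmult_le_reg_r (PI * (2 * (m+1) + 1))). apply Rmult_lt_0_compat; lra.
    unfold Rdiv. rewrite Rmult_assoc, Rinv_l. 2:{ apply Rgt_not_eq. apply Rmult_gt_0_compat; lra. }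
    nra.
  - apply (Rmult_le_reg_r PI). lra. rewrite Rinv_l by lra. nra.
Qed.

Lemma sm_ext (f g : nat -> R) N : (forall n, (n < N)%nat -> f n = g n) -> sm f N = sm g N.
Proof. induction N; intros H; simpl. auto. rewrite IHN, H; auto. Qed.

Lemma sm_plus (f g : nat -> R) N : sm (fun n => f n + g n) N = sm f N + sm g N.
Proof. induction N; simpl. ring. rewrite IHN; ring. Qed.

Lemma sm_minus (f g : nat -> R) N : sm (fun n => f n - g n) N = sm f N - sm g N.
Proof. induction N; simpl. ring. rewrite IHN; ring. Qed.

Lemma sm_scal (c : R) (f : nat -> R) N : sm (fun n => c * f n) N = c * sm f N.
Proof. induction N; simpl. ring. rewrite IHN; ring. Qed.

Lemma sm_swap (F : nat -> nat -> R) K N :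
  sm (fun m => sm (fun n => F m n) N) K = sm (fun n => sm (fun m => F m n) K) N.
Proof.
  induction K; simpl.
  - clear. induction N; simpl; auto. rewrite <- IHN; ring.
  - rewrite IHK. rewrite <- sm_plus. auto.
Qed.

Lemma sm_le (f g : nat -> R) N : (forall n, (n < N)%nat -> f n <= g n) -> sm f N <= sm g N.
Proof. induction N; intros H; simpl. lra. pose proof (H N ltac:(lia)). pose proof (IHN ltac:(intros; apply H; lia)). lra. Qed.

Lemma sm_abs (f : nat -> R) N : Rabs (sm f N) <= sm (fun n => Rabs (f n)) N.
Proof. induction N; simpl. rewrite Rabs_R0; lra. eapply Rle_trans. apply Rabs_triang. lra. Qed.

Lemma sm_lim (a : nat -> R) (l : R) : is_series a l -> is_lim_seq (sm a) l.
Proof.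
  intros H. apply is_lim_seq_incr_1.
  apply (is_lim_seq_ext (sum_n a)). intros; rewrite sm_sum_n; auto.
  exact H.
Qed.

Lemma INR_odd_ne (M k : nat) : 2 * INR M <> 2 * INR k + 1.
Proof.
  intros H. assert (INR (2 * M) = INR (2 * k + 1)) by (rewrite plus_INR, !mult_INR; simpl; lra).
  apply INR_eq in H0. lia.
Qed.

Lemma ne_m32 M : INR M - 3/2 <> 0.
Proof. intros H. apply (INR_odd_ne M 1). simpl. lra. Qed.
Lemma ne_m12 M : INR M - 1/2 <> 0.
Proof. intros H. apply (INR_odd_ne M 0). simpl. lra. Qed.
Lemma ne_2m3 M : 2 * INR M - 3 <> 0.
Proof. intros H. apply (INR_odd_ne M 1). simpl. lra. Qed.
Lemma ne_2m1 M : 2 * INR M - 1 <> 0.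
Proof. intros H. apply (INR_odd_ne M 0). simpl. lra. Qed.

Fixpoint cc (m : nat) : R :=
  match m with O => 1 | S k => cc k * (INR k - 3/2) * (INR k + 1/2) / (INR k + 1)^2 end.

Lemma cc_ww M : cc M = 3/4 * ww M ^ 2 / ((INR M - 3/2) * (INR M - 1/2)).
Proof.
  induction M.
  - simpl. field.
  - simpl cc. simpl ww. rewrite IHM. rewrite S_INR. pose proof (pos_INR M).
    pose proof (ne_m32 M). pose proof (ne_m12 M).
    field. repeat split; try lra.
Qed.

Lemma cc_nonneg M : (2 <= M)%nat -> 0 <= cc M.
Proof.
  intros H. rewrite cc_ww. assert (2 <= INR M) by (apply (le_INR 2); auto).
  pose proof (ww_pos M).
  apply Rmult_le_pos. apply Rmult_le_pos. lra. apply pow_le; lra.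
  apply Rlt_le, Rinv_0_lt_compat. apply Rmult_lt_0_compat; lra.
Qed.

Lemma sm_cc M : sm cc M = 4/9 * INR M ^ 2 * (4 * INR M - 7) * cc M.
Proof.
  induction M.
  - simpl. ring.
  - simpl sm. rewrite IHM. simpl cc. rewrite S_INR. pose proof (pos_INR M). field. lra.
Qed.

Definition dd (n : nat) : R :=
  45 / ((2 * INR n - 3) * (2 * INR n - 1) * (2 * INR n + 1) * (2 * INR n + 3) * (2 * INR n + 5)).

Definition TT (n : nat) : R :=
  / ((2 * INR n - 3) * (2 * INR n - 1) * (2 * INR n + 1) * (2 * INR n + 3)).

Lemma sm_dd N : sm dd N = 5/8 - 45/8 * TT N.
Proof.
  induction N.
  - simpl. unfold TT. simpl. field.
  - simpl sm. rewrite IHN. unfold dd, TT. rewrite S_INR. pose proof (pos_INR N).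
    pose proof (ne_2m3 N). pose proof (ne_2m1 N).
    field. repeat split; try lra.
Qed.

Lemma dd_pos n : (2 <= n)%nat -> 0 < dd n.
Proof.
  intros H. assert (2 <= INR n) by (apply (le_INR 2); auto). unfold dd.
  apply Rdiv_lt_0_compat. lra.
  repeat apply Rmult_lt_0_compat; lra.
Qed.

Fixpoint beta (m n : nat) : R :=
  match n with
  | O => / (INR m + 1)
  | S k => beta m k * (2 * INR k + 3) * (INR m - INR k) / ((2 * INR k + 1) * (INR m + INR k + 2))
  end.

Lemma beta_0 m : beta m 0 = / (INR m + 1).
Proof. reflexivity. Qed.
Lemma beta_S m k : beta m (S k) = beta m k * (2 * INR k + 3) * (INR m - INR k) / ((2 * INR k + 1) * (INR m + INR k + 2)).
Proof. reflexivity. Qed.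

Lemma beta_zero m n : (m < n)%nat -> beta m n = 0.
Proof.
  induction n; intros H. lia.
  simpl. destruct (Nat.eq_dec m n) as [->|Hne].
  - replace (INR n - INR n) with 0 by ring. unfold Rdiv. ring.
  - rewrite IHn by lia. unfold Rdiv. ring.
Qed.

Lemma beta_nonneg m n : 0 <= beta m n.
Proof.
  induction n.
  - simpl. pose proof (pos_INR m). apply Rlt_le, Rinv_0_lt_compat. lra.
  - simpl. destruct (Nat.le_gt_cases n m) as [Hle|Hlt].
    + assert (INR n <= INR m) by (apply le_INR; auto). pose proof (pos_INR n). pose proof (pos_INR m).
      apply Rmult_le_pos. apply Rmult_le_pos. apply Rmult_le_pos. auto. lra. lra.
      apply Rlt_le, Rinv_0_lt_compat. apply Rmult_lt_0_compat; lra.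
    + rewrite (beta_zero m n Hlt). unfold Rdiv. lra.
Qed.

Lemma beta_shift M n :
  beta (S M) n * (INR M + 1 - INR n) * (INR M + INR n + 2) = (INR M + 1)^2 * beta M n.
Proof.
  induction n.
  - rewrite !beta_0. rewrite S_INR. pose proof (pos_INR M). change (INR 0) with 0. field. lra.
  - rewrite !beta_S. rewrite !S_INR. pose proof (pos_INR M). pose proof (pos_INR n).
    assert (E : beta M n = beta (S M) n * (INR M + 1 - INR n) * (INR M + INR n + 2) / (INR M + 1)^2)
      by (rewrite IHn; field; lra).
    rewrite E. field. repeat split; lra.
Qed.

Fixpoint Pu (u : R) (n : nat) : R :=
  match n with O => 1 | S k => Pu u k * (u - INR k - 1) / (u + INR k + 1) end.

Lemma Pu_bound u n : 0 < u -> Rabs (Pu u n) <= 1.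
Proof.
  intros Hu. induction n; simpl.
  - rewrite Rabs_R1; lra.
  - pose proof (pos_INR n). unfold Rdiv. rewrite !Rabs_mult.
    rewrite (Rabs_inv (u + INR n + 1)). rewrite (Rabs_right (u + INR n + 1)) by lra.
    assert (Rabs (u - INR n - 1) <= u + INR n + 1) by (apply Rabs_le; lra).
    assert (Rabs (u - INR n - 1) * / (u + INR n + 1) <= 1).
    { apply (Rmult_le_reg_r (u + INR n + 1)). lra. rewrite Rmult_assoc, Rinv_l by lra. lra. }
    pose proof (Rabs_pos (Pu u n)). pose proof (Rabs_pos (u - INR n - 1)).
    assert (0 <= / (u + INR n + 1)) by (apply Rlt_le, Rinv_0_lt_compat; lra).
    rewrite Rmult_assoc. 
    apply Rle_trans with (Rabs (Pu u n) * 1). apply Rmult_le_compat_l; auto. lra.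
Qed.

(* Gosper in n : identity (a) *)
Lemma sumP m u k : 0 < u ->
  sm (fun n => beta m n * Pu u n) (S k) =
  u / (u + INR m) - (INR m - INR k) * (u - INR k - 1) / ((u + INR m) * (2 * INR k + 1)) * (beta m k * Pu u k).
Proof.
  intros Hu. pose proof (pos_INR m). induction k.
  - simpl. field. lra.
  - change (sm (fun n => beta m n * Pu u n) (S (S k))) with
      (sm (fun n => beta m n * Pu u n) (S k) + beta m (S k) * Pu u (S k)).
    rewrite IHk. rewrite beta_S. change (Pu u (S k)) with (Pu u k * (u - INR k - 1) / (u + INR k + 1)). rewrite S_INR. pose proof (pos_INR k).
    field. repeat split; lra.
Qed.

Lemma sumP_full m u N : 0 < u -> (m < N)%nat ->
  sm (fun n => beta m n * Pu u n) N = u / (u + INR m).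
Proof.
  intros Hu H. destruct N. lia. rewrite sumP by auto.
  destruct (Nat.eq_dec m N) as [->|Hne].
  - replace (INR N - INR N) with 0 by ring. unfold Rdiv. ring.
  - rewrite (beta_zero m N) by lia. ring.
Qed.

Lemma sumB m k :
  sm (beta m) (S k) = 1 - (INR m - INR k) / (2 * INR k + 1) * beta m k.
Proof.
  pose proof (pos_INR m). induction k.
  - simpl. field. lra.
  - change (sm (beta m) (S (S k))) with (sm (beta m) (S k) + beta m (S k)).
    rewrite IHk. rewrite beta_S. rewrite S_INR. pose proof (pos_INR k).
    field. repeat split; lra.
Qed.

Lemma sumB_full m N : (m < N)%nat -> sm (beta m) N = 1.
Proof.
  intros H. destruct N. lia. rewrite sumB.
  destruct (Nat.eq_dec m N) as [->|Hne].
  - replace (INR N - INR N) with 0 by ring. unfold Rdiv. ring.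
  - rewrite (beta_zero m N) by lia. ring.
Qed.

Definition AA (n : nat) : R :=
  128 / ((2 * INR n - 3) * (2 * INR n - 1) * (2 * INR n + 1)^2 * (2 * INR n + 3) * (2 * INR n + 5)).

Definition zz (n : nat) (x : R) : R :=
  let N := INR n * (INR n + 1) in
  AA n * (x^2 + (N - 7/4) * x + ((N - 7/4)^2 - 5/2) / 2).

Lemma zz_gosper n x :
  zz n (x + 1) * ((x - 3/2) * (x + 1/2)) - (x^2 + x - INR n * (INR n + 1)) * zz n x = 1.
Proof.
  unfold zz, AA. pose proof (pos_INR n). pose proof (ne_2m3 n). pose proof (ne_2m1 n).
  field. repeat split; lra.
Qed.

Lemma cc_S k : cc (S k) = cc k * (INR k - 3/2) * (INR k + 1/2) / (INR k + 1)^2.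
Proof. reflexivity. Qed.

Definition GG (n M : nat) : R := sm (fun m => cc m * beta m n) M.

Lemma GG_closed n M :
  GG n M = (INR M - INR n) * (INR M + INR n + 1) * zz n (INR M) * cc M * beta M n.
Proof.
  unfold GG. induction M.
  - simpl sm. destruct n.
    + change (INR 0) with 0. ring.
    + rewrite beta_zero by lia. ring.
  - change (sm (fun m => cc m * beta m n) (S M)) with (sm (fun m => cc m * beta m n) M + cc M * beta M n).
    rewrite IHM. rewrite cc_S. rewrite S_INR. pose proof (pos_INR M). pose proof (pos_INR n).
    pose proof (beta_shift M n) as Hb. pose proof (zz_gosper n (INR M)) as Hz.
    replace ((INR M + 1 - INR n) * (INR M + 1 + INR n + 1) * zz n (INR M + 1) *
      (cc M * (INR M - 3 / 2) * (INR M + 1 / 2) / (INR M + 1) ^ 2) * beta (S M) n)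
      with (zz n (INR M + 1) * ((INR M - 3/2) * (INR M + 1/2)) * cc M / (INR M + 1)^2 *
            (beta (S M) n * (INR M + 1 - INR n) * (INR M + INR n + 2))) by (field; lra).
    rewrite Hb.
    replace (zz n (INR M + 1) * ((INR M - 3/2) * (INR M + 1/2)))
      with (1 + (INR M ^ 2 + INR M - INR n * (INR M + 1) * 0 - INR n * (INR n + 1)) * zz n (INR M)) by lra.
    field. lra.
Qed.

Lemma is_lim_seq_eqv (u : nat -> R) (l1 l2 : R) : is_lim_seq u l1 -> l1 = l2 -> is_lim_seq u l2.
Proof. intros H <-; exact H. Qed.

Lemma lim_rat0' (g : R -> R) (f : nat -> R) (l : R) :
  ex_derive g 0 -> g 0 = l -> (forall n, (1 <= n)%nat -> f n = g (/ INR n)) -> is_lim_seq f l.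
Proof. intros Hd Hl Hf. rewrite <- Hl. apply lim_rat0; auto. Qed.

Lemma INR_ge1 n : (1 <= n)%nat -> 1 <= INR n.
Proof. intros H. apply (le_INR 1); auto. Qed.

Lemma lim_Mbeta n : is_lim_seq (fun M => INR M * beta M n) (2 * INR n + 1).
Proof.
  induction n.
  - apply (lim_rat0' (fun x => 1 / (1 + x))).
    + auto_derive. lra.
    + change (INR 0) with 0. field.
    + intros M HM. pose proof (INR_ge1 M HM). rewrite beta_0. field; split; lra.
  - assert (H2 : is_lim_seq (fun M => (2 * INR n + 3) * (INR M - INR n) / ((2 * INR n + 1) * (INR M + INR n + 2)))
                   ((2 * INR n + 3) / (2 * INR n + 1))).
    { pose proof (pos_INR n).
      apply (lim_rat0' (fun x => (2 * INR n + 3) * (1 - INR n * x) / ((2 * INR n + 1) * (1 + (INR n + 2) * x)))).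
      + auto_derive. apply Rgt_not_eq. apply Rmult_gt_0_compat; lra.
      + field. lra.
      + intros M HM. pose proof (INR_ge1 M HM).
        assert (0 < / INR M) by (apply Rinv_0_lt_compat; lra).
        field; repeat split; try lra; try nra. }
    pose proof (is_lim_seq_mult' _ _ _ _ IHn H2) as H.
    eapply is_lim_seq_ext in H.
    + eapply is_lim_seq_eqv. exact H. rewrite S_INR. pose proof (pos_INR n). field. lra.
    + intros M. cbv beta. rewrite beta_S. unfold Rdiv. ring.
Qed.

Lemma lim_M3cc : is_lim_seq (fun M => INR M ^ 3 * cc M) (3 / (4 * PI)).
Proof.
  pose proof PI_RGT_0 as Hpi.
  assert (H2 : is_lim_seq (fun M => INR M ^ 2 / ((INR M - 3/2) * (INR M - 1/2))) 1).
  { apply (lim_rat0' (fun x => 1 / ((1 - 3/2 * x) * (1 - x / 2)))).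
    + auto_derive. lra.
    + field.
    + intros M HM. pose proof (INR_ge1 M HM). pose proof (ne_m32 M). pose proof (ne_m12 M).
      assert (E1 : 1 - 3/2 * / INR M = (INR M - 3/2) / INR M) by (field; lra).
      assert (E2 : 1 - / INR M / 2 = (INR M - 1/2) / INR M) by (field; lra).
      rewrite E1, E2. field. repeat split; lra. }
  pose proof (is_lim_seq_mult' _ _ _ _ wallis H2) as H.
  apply (is_lim_seq_scal_l _ (3/4)) in H.
  eapply is_lim_seq_ext in H.
  - eapply is_lim_seq_eqv. exact H. simpl. field. lra.
  - intros M. simpl. rewrite (cc_ww M). pose proof (ne_m32 M). pose proof (ne_m12 M). field. lra.
Qed.

Lemma lim_GG n : is_lim_seq (GG n) (32 / (15 * PI) * dd n).
Proof.
  pose proof PI_RGT_0 as Hpi. pose proof (pos_INR n) as Hn.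
  set (N := INR n * (INR n + 1)).
  assert (H1 : is_lim_seq (fun M => (INR M - INR n) * (INR M + INR n + 1) * zz n (INR M) / INR M ^ 4) (AA n)).
  { apply (lim_rat0' (fun x => (1 - INR n * x) * (1 + (INR n + 1) * x) * AA n *
                            (1 + (N - 7/4) * x + ((N - 7/4)^2 - 5/2) / 2 * x^2))).
    + auto_derive. auto.
    + ring.
    + intros M HM. pose proof (INR_ge1 M HM). unfold zz. fold N. field. lra. }
  pose proof (is_lim_seq_mult' _ _ _ _ (is_lim_seq_mult' _ _ _ _ H1 (lim_Mbeta n)) lim_M3cc) as H.
  eapply is_lim_seq_ext_loc in H.
  - eapply is_lim_seq_eqv. exact H. unfold AA, dd.
    pose proof (ne_2m3 n). pose proof (ne_2m1 n). field. repeat split; lra.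
  - exists 1%nat. intros M HM. pose proof (INR_ge1 M HM). rewrite GG_closed. field. lra.
Qed.

Lemma GG_le n N : (2 <= N)%nat -> GG n N <= 32 / (15 * PI) * dd n.
Proof.
  intros HN.
  pose proof (proj1 (is_lim_seq_incr_n (GG n) 2 _) (lim_GG n)) as H.
  replace N with ((N - 2) + 2)%nat by lia.
  apply (is_lim_seq_incr_compare (fun k => GG n (k + 2)) _ H).
  intros k. replace (S k + 2)%nat with (S (k + 2)) by lia. unfold GG.
  change (sm (fun m => cc m * beta m n) (S (k + 2))) with
    (sm (fun m => cc m * beta m n) (k + 2) + cc (k + 2)%nat * beta (k + 2)%nat n).
  pose proof (cc_nonneg (k + 2) ltac:(lia)). pose proof (beta_nonneg (k + 2) n).
  assert (0 <= cc (k + 2)%nat * beta (k + 2)%nat n) by (apply Rmult_le_pos; auto). lra.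
Qed.

Lemma lim_smcc : is_lim_seq (sm cc) (4 / (3 * PI)).
Proof.
  pose proof PI_RGT_0 as Hpi.
  assert (H1 : is_lim_seq (fun M => (4 * INR M - 7) / INR M) 4).
  { apply (lim_rat0' (fun x => 4 - 7 * x)). auto_derive; auto. ring.
    intros M HM. pose proof (INR_ge1 M HM). field. lra. }
  pose proof (is_lim_seq_mult' _ _ _ _ H1 lim_M3cc) as H.
  apply (is_lim_seq_scal_l _ (4/9)) in H.
  eapply is_lim_seq_ext_loc in H.
  - eapply is_lim_seq_eqv. exact H. simpl. field. lra.
  - exists 1%nat. intros M HM. pose proof (INR_ge1 M HM). rewrite sm_cc. field. lra.
Qed.

Lemma lim_smdd : is_lim_seq (sm dd) (5 / 8).
Proof.
  assert (H1 : is_lim_seq TT 0).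
  { apply (lim_rat0' (fun x => x^4 / ((2 - 3 * x) * (2 - x) * (2 + x) * (2 + 3 * x)))).
    + auto_derive. lra.
    + field.
    + intros M HM. pose proof (INR_ge1 M HM). pose proof (ne_2m3 M). pose proof (ne_2m1 M).
      unfold TT.
      assert (E1 : 2 - 3 * / INR M = (2 * INR M - 3) / INR M) by (field; lra).
      assert (E2 : 2 - / INR M = (2 * INR M - 1) / INR M) by (field; lra).
      assert (0 < / INR M) by (apply Rinv_0_lt_compat; lra).
      rewrite E1, E2. field; repeat split; try lra. }
  apply (is_lim_seq_scal_l _ (-(45/8))) in H1.
  apply (is_lim_seq_plus' (fun _ => 5/8) _ (5/8) _ (is_lim_seq_const _)) in H1.
  eapply is_lim_seq_ext in H1.
  - eapply is_lim_seq_eqv. exact H1. simpl. ring.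
  - intros N. simpl. rewrite sm_dd. ring.
Qed.

Lemma norm_R (x : R) : norm x = Rabs x.
Proof. reflexivity. Qed.

Lemma ex_series_absdd : ex_series (fun n => Rabs (dd n)).
Proof.
  assert (H : ex_series dd) by (eexists; apply sm_series; apply lim_smdd).
  apply (ex_series_incr_n _ 2) in H. apply (ex_series_incr_n _ 2).
  eapply ex_series_ext; [|exact H].
  intros k. simpl. rewrite Rabs_right; auto. apply Rle_ge, Rlt_le, dd_pos. lia.
Qed.

Lemma sm_b_split u N : 0 < u ->
  sm (fun m => cc m * (u / (u + INR m))) N = sm (fun n => Pu u n * GG n N) N.
Proof.
  intros Hu.
  rewrite (sm_ext _ (fun m => sm (fun n => cc m * (beta m n * Pu u n)) N)).
  2:{ intros m Hm. rewrite sm_scal. rewrite sumP_full; auto. }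
  rewrite sm_swap. apply sm_ext. intros n _. unfold GG. rewrite <- sm_scal.
  apply sm_ext. intros; ring.
Qed.

Lemma sm_GG N : sm (fun n => GG n N) N = sm cc N.
Proof.
  unfold GG. rewrite <- sm_swap. apply sm_ext. intros m Hm.
  rewrite sm_scal. rewrite sumB_full; auto. ring.
Qed.

Lemma main_eq (u : R) : 0 < u ->
  ex_series (fun n => dd n * Pu u n) /\
  is_series (fun m => cc m * (u / (u + INR m))) (32 / (15 * PI) * Series (fun n => dd n * Pu u n)) /\
  Series (fun n => dd n * Pu u n) <> 0.
Proof.
  intros Hu. pose proof PI_RGT_0 as Hpi.
  set (a := fun n => dd n * Pu u n). set (b := fun m => cc m * (u / (u + INR m))).
  set (lam := 32 / (15 * PI)).
  assert (Ha : ex_series a).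
  { apply (ex_series_le a (fun n => Rabs (dd n))). 2: apply ex_series_absdd.
    intros n. rewrite norm_R. unfold a. rewrite Rabs_mult.
    pose proof (Pu_bound u n Hu). pose proof (Rabs_pos (dd n)).
    rewrite <- (Rmult_1_r (Rabs (dd n))) at 2. apply Rmult_le_compat_l; auto. }
  set (f := Series a).
  assert (Hf : is_lim_seq (sm a) f) by (apply sm_lim; apply Series_correct; auto).
  assert (HB : is_lim_seq (fun N => lam * sm dd N - sm cc N) 0).
  { eapply is_lim_seq_eqv.
    apply (is_lim_seq_minus' _ _ _ _ (is_lim_seq_scal_l _ lam _ lim_smdd) lim_smcc).
    simpl. unfold lam. field. lra. }
  assert (Hbound : forall N, (2 <= N)%nat -> Rabs (lam * sm a N - sm b N) <= lam * sm dd N - sm cc N).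
  { intros N HN. unfold b. rewrite sm_b_split by auto.
    rewrite <- sm_GG. rewrite <- sm_scal. rewrite <- sm_scal. rewrite <- !sm_minus.
    eapply Rle_trans. apply sm_abs. apply sm_le. intros n Hn. unfold a.
    pose proof (GG_le n N HN). fold lam in H.
    replace (lam * (dd n * Pu u n) - Pu u n * GG n N) with (Pu u n * (lam * dd n - GG n N)) by ring.
    rewrite Rabs_mult. rewrite (Rabs_right (lam * dd n - GG n N)) by lra.
    pose proof (Pu_bound u n Hu).
    rewrite <- (Rmult_1_l (lam * dd n - GG n N)) at 2. apply Rmult_le_compat_r; lra. }
  assert (HD : is_lim_seq (fun N => lam * sm a N - sm b N) 0).
  { apply (is_lim_seq_le_le_loc (fun N => - (lam * sm dd N - sm cc N)) _ (fun N => lam * sm dd N - sm cc N)).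
    - exists 2%nat. intros N HN. pose proof (Hbound N HN). apply Rabs_le_between in H. lra.
    - apply (is_lim_seq_eqv _ (-0) 0). apply (proj1 (is_lim_seq_opp _ 0) HB). ring.
    - exact HB. }
  assert (Hb : is_series b (lam * f)).
  { apply sm_series.
    pose proof (is_lim_seq_minus' _ _ _ _ (is_lim_seq_scal_l _ lam _ Hf) HD) as H.
    eapply is_lim_seq_ext in H. eapply is_lim_seq_eqv. exact H. ring.
    intros N. cbv beta. ring. }
  split; auto. split. exact Hb.
  intros Hf0. fold f in Hf0.
  assert (Hlow : forall k, 1/4 <= sm b (k + 2)).
  { induction k.
    - simpl sm. unfold b. rewrite (cc_S 0). change (INR 0) with 0. change (INR 1) with 1. simpl cc.
      assert (E : u / (u + 1) = 1 - / (u + 1)) by (field; lra).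
      assert (0 < / (u + 1)) by (apply Rinv_0_lt_compat; lra).
      assert (0 <= u / (u + 1)) by (apply Rlt_le, Rdiv_lt_0_compat; lra).
      replace (u / (u + 0)) with 1 by (field; lra). nra.
    - replace (S k + 2)%nat with (S (k + 2)) by lia. simpl sm. unfold b at 2.
      pose proof (cc_nonneg (k+2) ltac:(lia)). pose proof (pos_INR (k+2)).
      assert (0 <= u / (u + INR (k+2))) by (apply Rlt_le, Rdiv_lt_0_compat; lra).
      assert (0 <= cc (k+2)%nat * (u / (u + INR (k + 2)))) by (apply Rmult_le_pos; auto). lra. }
  apply sm_lim in Hb. apply (is_lim_seq_incr_n _ 2) in Hb.
  pose proof (is_lim_seq_le _ _ _ _ Hlow (is_lim_seq_const (1/4)) Hb) as H. simpl in H.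
  rewrite Hf0 in H. lra.
Qed.

Lemma poch_S x n : poch x (S n) = poch x n * (x + INR n).
Proof. reflexivity. Qed.

Lemma poch_pos x n : 0 < x -> 0 < poch x n.
Proof.
  intros Hx. induction n. simpl; lra. rewrite poch_S. pose proof (pos_INR n).
  apply Rmult_lt_0_compat; lra.
Qed.

Lemma poch_1 n : poch 1 n = INR (Factorial.fact n).
Proof.
  induction n. reflexivity. rewrite poch_S, IHn. rewrite fact_simpl, mult_INR, S_INR. ring.
Qed.

Lemma poch_d n : poch (-3/2) n = dd n * poch (7/2) n.
Proof.
  induction n.
  - simpl. unfold dd. change (INR 0) with 0. field.
  - rewrite !poch_S, IHn. unfold dd. rewrite S_INR. pose proof (pos_INR n).
    pose proof (ne_2m3 n). pose proof (ne_2m1 n). field. repeat split; lra.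
Qed.

Lemma poch_P eta n : -1 < eta -> poch (-eta) n * (-1)^n = Pu (eta + 1) n * poch (2 + eta) n.
Proof.
  intros He. induction n.
  - simpl. ring.
  - rewrite !poch_S. change (Pu (eta + 1) (S n)) with (Pu (eta+1) n * (eta + 1 - INR n - 1) / (eta + 1 + INR n + 1)).
    pose proof (pos_INR n).
    replace (poch (- eta) n * (- eta + INR n) * (-1) ^ S n) with ((poch (- eta) n * (-1)^n) * (eta - INR n)) by (simpl; ring).
    rewrite IHn. field. lra.
Qed.

Lemma poch_c n : poch (-3/2) n * poch (1/2) n = cc n * INR (Factorial.fact n) ^ 2.
Proof.
  induction n.
  - simpl. ring.
  - rewrite !poch_S. rewrite cc_S. rewrite fact_simpl, mult_INR, S_INR.
    replace (poch (-3/2) n * (-3/2 + INR n) * (poch (1/2) n * (1/2 + INR n)))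
      with ((poch (-3/2) n * poch (1/2) n) * ((INR n - 3/2) * (INR n + 1/2))) by field.
    rewrite IHn. pose proof (pos_INR n). field. lra.
Qed.

Lemma poch_u eta n : -1 < eta -> poch (1 + eta) n * ((eta + 1) + INR n) = (eta + 1) * poch (2 + eta) n.
Proof.
  intros He. induction n.
  - simpl. ring.
  - rewrite !poch_S. rewrite S_INR.
    replace (poch (1 + eta) n * (1 + eta + INR n) * (eta + 1 + (INR n + 1)))
      with ((poch (1 + eta) n * (eta + 1 + INR n)) * (2 + eta + INR n)) by ring.
    rewrite IHn. ring.
Qed.

Lemma term1 eta n : -1 < eta ->
  hyp_term [-3/2; 1; -eta] [7/2; 2 + eta] (-1) n = dd n * Pu (eta + 1) n.
Proof.
  intros He. unfold hyp_term, poch_prod. simpl fold_right.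
  rewrite poch_d, poch_1.
  pose proof (poch_P eta n He) as HP.
  assert (H7 : 0 < poch (7/2) n) by (apply poch_pos; lra).
  assert (H2 : 0 < poch (2 + eta) n) by (apply poch_pos; lra).
  assert (HF : 0 < INR (Factorial.fact n)) by (apply lt_0_INR, Factorial.lt_O_fact).
  assert (E : Pu (eta + 1) n = poch (- eta) n * (-1) ^ n / poch (2 + eta) n) by (rewrite HP; field; lra).
  rewrite E. field. repeat split; lra.
Qed.

Lemma term2 eta n : -1 < eta ->
  hyp_term [-3/2; 1/2; 1 + eta] [1; 2 + eta] 1 n = cc n * ((eta + 1) / ((eta + 1) + INR n)).
Proof.
  intros He. unfold hyp_term, poch_prod. simpl fold_right.
  rewrite poch_1, pow1.
  pose proof (poch_c n) as Hc. pose proof (poch_u eta n He) as Hu.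
  assert (H2 : 0 < poch (2 + eta) n) by (apply poch_pos; lra).
  assert (HF : 0 < INR (Factorial.fact n)) by (apply lt_0_INR, Factorial.lt_O_fact).
  pose proof (pos_INR n).
  assert (E1 : poch (1 + eta) n = (eta + 1) * poch (2 + eta) n / ((eta + 1) + INR n)) by (rewrite <- Hu; field; lra).
  assert (E2 : cc n = poch (-3/2) n * poch (1/2) n / INR (Factorial.fact n) ^ 2) by (rewrite Hc; field; lra).
  rewrite E1, E2. field. repeat split; lra.
Qed.

Theorem mainTheorem15 (eta : R) (heta : -1 < eta) :
  ex_series (hyp_term [-3/2; 1; -eta] [7/2; 2 + eta] (-1)) /\
  ex_series (hyp_term [-3/2; 1/2; 1 + eta] [1; 2 + eta] 1) /\
  15 * PI / 32 =
    pFq [-3/2; 1; -eta] [7/2; 2 + eta] (-1) /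
    pFq [-3/2; 1/2; 1 + eta] [1; 2 + eta] 1.
Proof.
  assert (Hu : 0 < eta + 1) by lra.
  destruct (main_eq (eta + 1) Hu) as [Ha [Hb Hf]].
  pose proof PI_RGT_0 as Hpi.
  assert (E1 : forall n, hyp_term [-3/2; 1; -eta] [7/2; 2 + eta] (-1) n = dd n * Pu (eta + 1) n)
    by (intros; apply term1; auto).
  assert (E2 : forall n, hyp_term [-3/2; 1/2; 1 + eta] [1; 2 + eta] 1 n = cc n * ((eta + 1) / ((eta + 1) + INR n)))
    by (intros; apply term2; auto).
  split; [|split].
  - eapply ex_series_ext; [|exact Ha]. intros n; rewrite E1; auto.
  - eexists. eapply is_series_ext; [|exact Hb]. intros n; rewrite E2; auto.
  - unfold pFq. rewrite (Series_ext _ _ E1), (Series_ext _ _ E2).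
    rewrite (is_series_unique _ _ Hb). field. split; lra.
Qed.
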